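(* Let $(x,y)$ be a vertex of the convex hull of the set of feasible solutions of a CKFLU instance with $m=|D|$ clients. Let $G=(V,E)$ be its associated bipartite graph and $H=(\bar V,\bar E)$ its untight subgraph. Then: (a) $G$ is acyclic; (b) each connected component of $H$ contains at most one facility $i\in F\cap\bar V$ with $0<\sum_{j\in D}x_{ij}<s$; (c) $H$ contains at most $m$ facilities and at most $2m-1$ edges.
   Context: An instance of the capacitated $k$-facility location problem with uniform capacities (CKFLU) consists of a finite set $F$ of facilities with opening costs $f_i\ge 0$, a finite set $D$ of clients with integer demands $d_j\ge 0$, unit service costs $c_{ij}\ge 0$ ($i\in F$, $j\in D$), a common positive integer capacity $s$, and an integer $k\ge1$. A feasible solution is $(x,y)$ with $x_{ij}\ge 0$, $y\in\{0,1\}^F$, $\sum_{i\in F}x_{ij}=d_j$ for all $j\in D$, $\sum_{j\in D}x_{ij}\le s\,y_i$ for all $i\in F$, and $\sum_{i\in F}y_i\le k$. For a feasible solution $(x,y)$, its associated bipartite graph is $G=(V,E)$ with $V=\{i\in F: y_i=1\}\cup D$ and $E=\{\{i,j\}: i\in F,\ j\in D,\ x_{ij}>0\}$, edge $\{i,j\}$ having weight $x_{ij}$. Its untight subgraph is $H=(\bar V,\bar E)$ where $\bar E=\{\{i,j\}\in E: 0<x_{ij}<s\}$ and $\bar V=\bigcup_{e\in\bar E}e$. *)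

(* Defs.v *)
From HB Require Import structures.
From mathcomp Require Import all_boot all_order all_algebra.
Set Implicit Arguments. Unset Strict Implicit. Unset Printing Implicit Defensive.
Import Order.TTheory GRing.Theory Num.Theory.
Local Open Scope ring_scope.

Section CKFLU.
Variables (R : realFieldType) (F D : finType).

Definition ckflu_feasible (d : D -> nat) (s k : nat)
    (x : F -> D -> R) (y : F -> R) : Prop :=
  [/\ (forall i j, 0 <= x i j),
      (forall i, y i = 0 \/ y i = 1),
      (forall j, \sum_(i : F) x i j = (d j)%:R),
      (forall i, \sum_(j : D) x i j <= s%:R * y i)
    & \sum_(i : F) y i <= k%:R].

Definition in_conv_hull (P : (F -> D -> R) -> (F -> R) -> Prop)
    (x : F -> D -> R) (y : F -> R) : Prop :=
  exists (n : nat) (w : 'I_n -> R) (X : 'I_n -> F -> D -> R) (Y : 'I_n -> F -> R),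
    [/\ (forall l, 0 <= w l),
        \sum_(l < n) w l = 1,
        (forall l, P (X l) (Y l)),
        (forall i j, x i j = \sum_(l < n) w l * X l i j)
      & (forall i, y i = \sum_(l < n) w l * Y l i)].

Definition is_vertex_conv_hull (P : (F -> D -> R) -> (F -> R) -> Prop)
    (x : F -> D -> R) (y : F -> R) : Prop :=
  in_conv_hull P x y /\
  forall (x1 x2 : F -> D -> R) (y1 y2 : F -> R) (t : R),
    in_conv_hull P x1 y1 -> in_conv_hull P x2 y2 -> 0 < t < 1 ->
    (forall i j, x i j = t * x1 i j + (1 - t) * x2 i j) ->
    (forall i, y i = t * y1 i + (1 - t) * y2 i) ->
    (forall i j, x1 i j = x2 i j) /\ (forall i, y1 i = y2 i).

(* Vertices of the graphs are facilities (inl) and clients (inr). *)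

Definition assoc_edge (x : F -> D -> R) (y : F -> R) : rel (F + D) :=
  fun u v => match u, v with
  | inl i, inr j => (y i == 1) && (0 < x i j)
  | inr j, inl i => (y i == 1) && (0 < x i j)
  | _, _ => false
  end.

Definition untight_edge (s : nat) (x : F -> D -> R) : rel (F + D) :=
  fun u v => match u, v with
  | inl i, inr j => (0 < x i j < s%:R)
  | inr j, inl i => (0 < x i j < s%:R)
  | _, _ => false
  end.

Definition acyclic (T : eqType) (e : rel T) : Prop :=
  forall c : seq T, uniq c -> (2 < size c)%N -> ~~ cycle e c.

(* Facilities in V-bar (incident to an untight edge). *)
Definition untight_facility (s : nat) (x : F -> D -> R) (i : F) : bool :=
  [exists j : D, 0 < x i j < s%:R].

End CKFLU.

(* Main.v *)
Require Import Defs.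
From HB Require Import structures.
From mathcomp Require Import all_boot all_order all_algebra.
From mathcomp Require Import ring lra zify.
Set Implicit Arguments. Unset Strict Implicit. Unset Printing Implicit Defensive.
Import Order.TTheory GRing.Theory Num.Theory.
Local Open Scope ring_scope.

Section Aux.
Variables (R : realFieldType) (F D : finType).

Lemma ler_sum1 (I : finType) (G : I -> R) a :
  (forall i, 0 <= G i) -> G a <= \sum_i G i.
Proof. by move=> h; rewrite (bigD1 a) //= lerDl sumr_ge0. Qed.

Lemma feas_ext d s k (x x' : F -> D -> R) (y y' : F -> R) :
  (forall i j, x i j = x' i j) -> (forall i, y i = y' i) ->
  ckflu_feasible d s k x' y' -> ckflu_feasible d s k x y.
Proof.
move=> hx hy [h1 h2 h3 h4 h5]; split.
- by move=> i j; rewrite hx.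
- by move=> i; rewrite hy.
- by move=> j; rewrite -(h3 j); apply: eq_bigr => i _; rewrite hx.
- by move=> i; rewrite hy (le_trans _ (h4 i)) // le_eqVlt; apply/orP; left;
    apply/eqP; apply: eq_bigr => j _; rewrite hx.
- by rewrite (le_trans _ h5) // le_eqVlt; apply/orP; left;
    apply/eqP; apply: eq_bigr => i _; rewrite hy.
Qed.

Lemma hull1 (P : (F -> D -> R) -> (F -> R) -> Prop) x y :
  P x y -> in_conv_hull P x y.
Proof.
move=> h; exists 1%N, (fun _ => 1), (fun _ => x), (fun _ => y); split => //.
- by rewrite big_ord1.
- by move=> i j; rewrite big_ord1 mul1r.
- by move=> i; rewrite big_ord1 mul1r.
Qed.

Lemma vertex_feas (P : (F -> D -> R) -> (F -> R) -> Prop) x y :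
  (forall x x' y y', (forall i j, x i j = x' i j) -> (forall i, y i = y' i) ->
     P x' y' -> P x y) ->
  is_vertex_conv_hull P x y -> P x y.
Proof.
move=> Pext [[n [w [X [Y [w0 w1 PX hx hy]]]]] ext].
have [l wl] : exists l, 0 < w l.
  case/boolP: [exists l, 0 < w l] => [/existsP[l hl]|/existsPn hn]; first by exists l.
  have : \sum_(l < n) w l <= 0.
    by apply: sumr_le0 => l _; move: (hn l); rewrite -leNgt.
  by rewrite w1 ler10.
have wle1 : w l <= 1 by rewrite -w1 (ler_sum1 _ w0).
have hsplit : forall G : 'I_n -> R, \sum_(k < n) G k = G l + \sum_(k < n | k != l) G k.
  by move=> G; rewrite (bigD1 l).
have rest : \sum_(k < n | k != l) w k = 1 - w l by rewrite -w1 hsplit addrC addKr.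
case: (eqVneq (w l) 1) => [wl1|wln1].
  have w0k : forall k, k != l -> w k = 0.
    by move=> k kl; apply: (psumr_eq0P (P := fun k => k != l)) => // ; rewrite rest wl1 subrr.
  apply: (Pext x (X l) y (Y l)) => //.
  - move=> i j; rewrite hx hsplit wl1 mul1r big1 ?addr0 // => k kl; by rewrite w0k // mul0r.
  - move=> i; rewrite hy hsplit wl1 mul1r big1 ?addr0 // => k kl; by rewrite w0k // mul0r.
have wlt1 : w l < 1 by rewrite lt_neqAle wln1 wle1.
have pos : 0 < 1 - w l by rewrite subr_gt0.
pose w' := fun k : 'I_n => if k == l then 0 else w k / (1 - w l).
pose x' := fun i j => \sum_(k < n) w' k * X k i j.
pose y' := fun i => \sum_(k < n) w' k * Y k i.
have hull' : in_conv_hull P x' y'.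
  exists n, w', X, Y; split => //.
  - move=> k; rewrite /w'; case: (k == l) => //; by rewrite divr_ge0 // ltW.
  - rewrite hsplit /w' eqxx add0r.
    rewrite (eq_bigr (fun k => w k / (1 - w l))); last by move=> k /negbTE ->.
    by rewrite -mulr_suml rest divff // lt0r_neq0.
have ex : forall i j, x' i j * (1 - w l) = \sum_(k < n | k != l) w k * X k i j.
  move=> i j; rewrite /x' hsplit /w' eqxx mul0r add0r mulr_suml.
  apply: eq_bigr => k /negbTE ->; by rewrite mulrAC divfK ?lt0r_neq0.
have ey : forall i, y' i * (1 - w l) = \sum_(k < n | k != l) w k * Y k i.
  move=> i; rewrite /y' hsplit /w' eqxx mul0r add0r mulr_suml.
  apply: eq_bigr => k /negbTE ->; by rewrite mulrAC divfK ?lt0r_neq0.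
have t01 : 0 < w l < 1 by rewrite wl wlt1.
have hx2 : forall i j, x i j = w l * X l i j + (1 - w l) * x' i j.
  by move=> i j; rewrite [(1 - w l) * _]mulrC ex hx hsplit.
have hy2 : forall i, y i = w l * Y l i + (1 - w l) * y' i.
  by move=> i; rewrite [(1 - w l) * _]mulrC ey hy hsplit.
have [ex2 ey2] := ext (X l) x' (Y l) y' (w l) (hull1 (PX l)) hull' t01 hx2 hy2.
apply: (Pext x (X l) y (Y l)) => //.
- move=> i j; rewrite hx hsplit. rewrite -ex -ex2; ring.
- move=> i; rewrite hy hsplit -ey -ey2; ring.
Qed.

Lemma vertex_feasible d s k (x : F -> D -> R) (y : F -> R) :
  is_vertex_conv_hull (ckflu_feasible d s k) x y -> ckflu_feasible d s k x y.
Proof. by apply: vertex_feas => ? ? ? ? ; apply: feas_ext. Qed.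

Lemma perturb d s k (x : F -> D -> R) (y : F -> R) (z : F -> D -> R) :
  is_vertex_conv_hull (ckflu_feasible d s k) x y ->
  (forall i j, z i j != 0 -> 0 < x i j) ->
  (forall j, \sum_i z i j = 0) ->
  (forall i, \sum_j z i j != 0 -> \sum_j x i j < s%:R) ->
  forall i j, z i j = 0.
Proof.
move=> hv zx zc zr.
have [x0 ybin colx rowx sumy] := vertex_feasible hv.
pose S1 := \sum_(p : F * D) `|z p.1 p.2| / `|x p.1 p.2|.
pose S2 := \sum_i `|\sum_j z i j| / `|s%:R - \sum_j x i j|.
have S1ge : 0 <= S1 by apply: sumr_ge0 => p _; rewrite divr_ge0.
have S2ge : 0 <= S2 by apply: sumr_ge0 => p _; rewrite divr_ge0.
pose K := 1 + S1 + S2.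
have Kpos : 0 < K by rewrite /K; lra.
pose eps := K^-1.
have epspos : 0 < eps by rewrite invr_gt0.
have key : forall a b : R, 0 < b -> `|a| / `|b| <= K -> eps * `|a| <= b.
  move=> a b b0; rewrite (gtr0_norm b0) (ler_pdivrMr _ _ b0) => h.
  by rewrite /eps mulrC (ler_pdivrMr _ _ Kpos) [b * K]mulrC.
have T1 : forall i j, `|z i j| / `|x i j| <= K.
  move=> i j; have := ler_sum1 (G := fun p : F * D => `|z p.1 p.2| / `|x p.1 p.2|) (i, j).
  move=> /(_ (fun p => divr_ge0 (normr_ge0 _) (normr_ge0 _))) /= h.
  rewrite /K; rewrite -/S1 in h; lra.
have T2 : forall i, `|\sum_j z i j| / `|s%:R - \sum_j x i j| <= K.
  move=> i; have := ler_sum1 (G := fun i => `|\sum_j z i j| / `|s%:R - \sum_j x i j|) i.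
  move=> /(_ (fun p => divr_ge0 (normr_ge0 _) (normr_ge0 _))) /= h.
  rewrite /K; rewrite -/S2 in h; lra.
have feasd : forall del, `|del| = eps ->
    ckflu_feasible d s k (fun i j => x i j + del * z i j) y.
  move=> del hdel; split => //.
  - move=> i j; case: (eqVneq (z i j) 0) => [->|zn]; first by rewrite mulr0 addr0.
    have := key _ _ (zx _ _ zn) (T1 i j); rewrite -hdel -normrM => h.
    move: h; rewrite ler_norml => /andP[h1 _].
    set t := del * z i j in h1 *; lra.
  - move=> j; rewrite big_split /= -mulr_sumr zc mulr0 addr0; exact: colx.
  - move=> i; rewrite big_split /= -mulr_sumr.
    case: (eqVneq (\sum_j z i j) 0) => [->|zn]; first by rewrite mulr0 addr0.
    have ls := zr i zn.
    have yi : y i = 1.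
      have [j zj] : exists j, z i j != 0.
        case/boolP: [exists j, z i j != 0] => [/existsP[j hj]|/existsPn hn].
          by exists j.
        by move: zn; rewrite big1 ?eqxx // => j _; move: (hn j); rewrite negbK => /eqP.
      have xp := zx _ _ zj.
      have : x i j <= \sum_j x i j by apply: ler_sum1.
      case: (ybin i) => // y0; move: (rowx i); rewrite y0 mulr0 => h1 h2.
      lra.
    rewrite yi mulr1.
    have bpos : 0 < s%:R - \sum_j x i j by rewrite subr_gt0.
    have := key _ _ bpos (T2 i); rewrite -hdel -normrM ler_norml => /andP[_ h2].
    set t := del * _ in h2 *; set u := \sum_j x i j in h2 bpos *; lra.
have e1 : `|eps| = eps by rewrite gtr0_norm.
have e2 : `|- eps| = eps by rewrite normrN gtr0_norm.
have [_ ext] := hv.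
have t01 : 0 < (1/2 : R) < 1 by apply/andP; split; lra.
have hx2 : forall i j, x i j = 1/2 * (x i j + eps * z i j) + (1 - 1/2) * (x i j + - eps * z i j).
  by move=> i j; field; rewrite ?pnatr_eq0.
have hy2 : forall i, y i = 1/2 * y i + (1 - 1/2) * y i by move=> ii; field; rewrite ?pnatr_eq0.
have [hz _] := ext _ _ _ _ _ (hull1 (feasd _ e1)) (hull1 (feasd _ e2)) t01 hx2 hy2.
move=> i j; have h := hz i j; rewrite mulNr in h.
have : eps * z i j = 0 by set t := eps * z i j in h *; lra.
by move/eqP; rewrite mulf_eq0 (negbTE (lt0r_neq0 epspos)) => /eqP.
Qed.
End Aux.
Section Walk.
Variables (R : realFieldType) (F D : finType).

Definition side (u : F + D) : bool := if u is inl _ then true else false.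
Definition bip (e : rel (F + D)) := forall u w, e u w -> side w = ~~ side u.

Lemma path_side e u p : bip e -> path e u p ->
  side (last u p) = side u (+) odd (size p).
Proof.
move=> he; elim: p u => [|w p IH] u /=; first by rewrite addbF.
move=> /andP[euw hp]; rewrite IH // (he _ _ euw).
by case: (side u); case: (odd _).
Qed.

Definition matchE (u w : F + D) (i : F) (j : D) : bool :=
  match u, w with
  | inl a, inr b => (a == i) && (b == j)
  | inr b, inl a => (a == i) && (b == j)
  | _, _ => false
  end.
Definition isF (u : F + D) (i : F) : bool := if u is inl a then a == i else false.
Definition isC (u : F + D) (j : D) : bool := if u is inr b then b == j else false.

Fixpoint walkz (u : F + D) (p : seq (F + D)) : F -> D -> R :=
  match p with
  | [::] => fun _ _ => 0
  | w :: p' => fun i j => (matchE u w i j)%:R - walkz w p' i j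
  end.

Lemma sum_eq1 (T : finType) (b : T) : \sum_(j : T) ((b == j)%:R : R) = 1.
Proof. by rewrite (bigD1 b) //= eqxx big1 ?addr0 // => j /negbTE; rewrite eq_sym => ->. Qed.

Lemma sum_and (T : finType) (P : bool) (b : T) :
  \sum_(j : T) ((P && (b == j))%:R : R) = P%:R.
Proof. by case: P => /=; [rewrite sum_eq1 | rewrite big1]. Qed.

Lemma sum_and' (T : finType) (P : bool) (b : T) :
  \sum_(j : T) (((b == j) && P)%:R : R) = P%:R.
Proof. by rewrite -(sum_and P b); apply: eq_bigr => j _; rewrite andbC. Qed.

Lemma sum_matchF u w i : side w = ~~ side u ->
  \sum_j ((matchE u w i j)%:R : R) = (isF u i)%:R + (isF w i)%:R.
Proof. by case: u => [a|b]; case: w => [a'|b'] //= _; rewrite sum_and ?addr0 ?add0r. Qed.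

Lemma sum_matchC u w j : side w = ~~ side u ->
  \sum_i ((matchE u w i j)%:R : R) = (isC u j)%:R + (isC w j)%:R.
Proof. by case: u => [a|b]; case: w => [a'|b'] //= _; rewrite sum_and' ?addr0 ?add0r. Qed.

Lemma walkz_row e u p i : bip e -> path e u p ->
  \sum_j walkz u p i j = (isF u i)%:R - (-1)^+(size p) * (isF (last u p) i)%:R.
Proof.
move=> he; elim: p u => [|w p IH] u /=.
  by rewrite big1 // expr0 mul1r subrr.
move=> /andP[euw hp]; rewrite sumrB sum_matchF ?(he _ _ euw) // IH // exprS; ring.
Qed.

Lemma walkz_col e u p j : bip e -> path e u p ->
  \sum_i walkz u p i j = (isC u j)%:R - (-1)^+(size p) * (isC (last u p) j)%:R.
Proof.
move=> he; elim: p u => [|w p IH] u /=.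
  by rewrite big1 // expr0 mul1r subrr.
move=> /andP[euw hp]; rewrite sumrB sum_matchC ?(he _ _ euw) // IH // exprS; ring.
Qed.

Lemma walkz_supp e u p i j : path e u p -> walkz u p i j != 0 ->
  exists a b, e a b /\ matchE a b i j.
Proof.
elim: p u => [|w p IH] u /=; first by rewrite eqxx.
move=> /andP[euw hp]; case: (boolP (matchE u w i j)) => hm.
  by move=> _; exists u, w.
by rewrite /= sub0r oppr_eq0 => /(IH _ hp).
Qed.

Lemma matchE_fst u w i j : matchE u w i j -> isF u i || isC u j.
Proof. by case: u => [a|b]; case: w => [a'|b'] //= /andP[h1 h2]; rewrite ?h1 ?h2 ?orbT. Qed.

Lemma matchE_snd u w i j : matchE u w i j -> isF w i || isC w j.
Proof. by case: u => [a|b]; case: w => [a'|b'] //= /andP[h1 h2]; rewrite ?h1 ?h2 ?orbT. Qed.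

Lemma walkz_belast u p i j :
  (forall v, v \in belast u p -> ~~ (isF v i || isC v j)) -> walkz u p i j = 0.
Proof.
elim: p u => [|w p IH] u //= h.
rewrite IH ?subr0; last by move=> v hv; apply: h; rewrite inE hv orbT.
case: (boolP (matchE u w i j)) => // /matchE_fst hm.
by move: (h u); rewrite inE eqxx hm => /(_ isT).
Qed.

Lemma isF_eq v i : isF v i -> v = inl i.
Proof. by case: v => // a /eqP ->. Qed.
Lemma isC_eq v j : isC v j -> v = inr j.
Proof. by case: v => // a /eqP ->. Qed.

End Walk.
Section Lin.
Variable (R : fieldType).

Lemma inj_card2 (T B1 B2 : finType) (A : {set T}) (C1 : {set B1}) (C2 : {set B2})
  (K1 : T -> B1 -> R) (K2 : T -> B2 -> R) :
  (forall z : T -> R, (forall p, p \notin A -> z p = 0) ->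
     (forall b, b \in C1 -> \sum_p z p * K1 p b = 0) ->
     (forall b, b \in C2 -> \sum_p z p * K2 p b = 0) -> forall p, z p = 0) ->
  (#|A| <= #|C1| + #|C2|)%N.
Proof.
move=> h.
pose M1 := \matrix_(k < #|A|, l < #|C1|) K1 (enum_val k) (enum_val l).
pose M2 := \matrix_(k < #|A|, l < #|C2|) K2 (enum_val k) (enum_val l).
have rf : row_free (row_mx M1 M2).
  apply/inj_row_free => v; rewrite mul_mx_row => /eqP; rewrite row_mx_eq0.
  move=> /andP[/eqP h1 /eqP h2].
  pose z := fun p : T => \sum_(k < #|A|) (enum_val k == p)%:R * v 0 k.
  have zs : forall G : T -> R, \sum_p z p * G p = \sum_(k < #|A|) v 0 k * G (enum_val k).
    move=> G; rewrite /z.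
    under eq_bigr do rewrite mulr_suml.
    rewrite exchange_big /=; apply: eq_bigr => k _.
    rewrite (bigD1 (enum_val k)) //= eqxx mul1r big1 ?addr0 // => p /negbTE.
    by rewrite eq_sym => ->; rewrite !mul0r.
  have hz := h z.
  have zv : forall k, z (enum_val k) = v 0 k.
    move=> k; rewrite /z (bigD1 k) //= eqxx mul1r big1 ?addr0 // => k' kk'.
    by rewrite (inj_eq enum_val_inj) (negbTE kk') mul0r.
  have z0 : forall p, z p = 0.
    apply: hz.
    - move=> p pA; rewrite /z big1 // => k _.
      case: eqP => [e|]; last by rewrite mul0r.
      by move: pA; rewrite -e enum_valP.
    - move=> b bC; rewrite zs.
      pose l : 'I_#|C1| := enum_rank_in bC b.
      have lb : enum_val l = b by rewrite /l enum_rankK_in.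
      transitivity ((v *m M1) 0 l); last by rewrite h1 mxE.
      rewrite mxE; apply: eq_bigr => k _; by rewrite mxE lb.
    - move=> b bC; rewrite zs.
      pose l : 'I_#|C2| := enum_rank_in bC b.
      have lb : enum_val l = b by rewrite /l enum_rankK_in.
      transitivity ((v *m M2) 0 l); last by rewrite h2 mxE.
      rewrite mxE; apply: eq_bigr => k _; by rewrite mxE lb.
  by apply/rowP => k; rewrite mxE -zv z0.
by move: (rank_leq_col (row_mx M1 M2)); rewrite (eqP rf).
Qed.
End Lin.

Section Helpers.
Variables (R : realFieldType) (F D : finType).

Lemma sum_pair (G : F * D -> R) : \sum_p G p = \sum_i \sum_j G (i, j).
Proof. by rewrite pair_bigA; apply: eq_bigr => [[i j]] _. Qed.

Lemma sum_pairn (G : F * D -> nat) : (\sum_p G p = \sum_i \sum_j G (i, j))%N.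
Proof. by rewrite pair_bigA; apply: eq_bigr => [[i j]] _. Qed.

Lemma rowsum_conv (z : F * D -> R) i :
  \sum_p z p * (p.1 == i)%:R = \sum_j z (i, j).
Proof.
rewrite sum_pair (bigD1 i) //=.
have -> : \sum_(i' | i' != i) \sum_j z (i', j) * ((i', j).1 == i)%:R = 0.
  by apply: big1 => i' /negbTE ne; rewrite big1 // => j _ /=; rewrite ne mulr0.
by rewrite addr0; apply: eq_bigr => j _ /=; rewrite eqxx mulr1.
Qed.

Lemma colsum_conv (z : F * D -> R) j :
  \sum_p z p * (p.2 == j)%:R = \sum_i z (i, j).
Proof.
rewrite sum_pair; apply: eq_bigr => i _.
rewrite (bigD1 j) //= eqxx mulr1 big1 ?addr0 // => j' /negbTE ne /=.
by rewrite ne mulr0.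
Qed.

Lemma edge_pos (e : rel (F + D)) (P : F -> D -> Prop) u w i j :
  (forall i j, e (inl i) (inr j) -> P i j) ->
  (forall i j, e (inr j) (inl i) -> P i j) ->
  e u w -> matchE u w i j -> P i j.
Proof.
move=> h1 h2; case: u => [a|b]; case: w => [a'|b'] //= euw /andP[/eqP ea /eqP eb];
  subst; [exact: h1 | exact: h2].
Qed.

Lemma match_ex (u w : F + D) : side w = ~~ side u -> exists i0 j0, matchE u w i0 j0 /\
      (forall v, isF v i0 || isC v j0 -> v = u \/ v = w).
Proof.
case: u => [i0|j0]; case: w => [i1|j1] //= _.
+ exists i0, j1; rewrite !eqxx; split => // v /orP[/isF_eq|/isC_eq] ->; by [left|right].
+ exists i1, j0; rewrite !eqxx; split => // v /orP[/isF_eq|/isC_eq] ->; by [right|left].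
Qed.
End Helpers.

Theorem mainTheorem7 (R : realFieldType) (F D : finType)
    (f : F -> R) (d : D -> nat) (c : F -> D -> R) (s k : nat)
    (hf : forall i, 0 <= f i) (hc : forall i j, 0 <= c i j)
    (hs : (0 < s)%N) (hk : (1 <= k)%N)
    (x : F -> D -> R) (y : F -> R) :
  is_vertex_conv_hull (ckflu_feasible d s k) x y ->
  [/\ acyclic (assoc_edge x y),
      (forall i1 i2 : F,
         untight_facility s x i1 -> untight_facility s x i2 ->
         0 < \sum_(j : D) x i1 j < s%:R -> 0 < \sum_(j : D) x i2 j < s%:R ->
         connect (untight_edge s x) (inl i1) (inl i2) -> i1 = i2),
      leq #|[set i : F | untight_facility s x i]| #|D|
    & leq #|[set p : F * D | 0 < x p.1 p.2 < s%:R]| (2 * #|D|)%N.-1].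
Proof.
move=> hv.
have [x0 ybin colx rowx sumy] := vertex_feasible hv.

have cd : (#|[set i : F | untight_facility s x i]| <= #|D|)%N /\
          (#|[set p : F * D | (0 < x p.1 p.2 < s%:R)%R]| <= (2 * #|D|).-1)%N.
  set U := [set i : F | untight_facility s x i].
  set E := [set p : F * D | 0 < x p.1 p.2 < s%:R].
  pose load i := \sum_j x i j.
  pose Full := [set i in U | load i == s%:R].
  have load_le : forall i, load i <= s%:R.
    move=> i; have := rowx i; case: (ybin i) => -> ; last by rewrite mulr1.
    by rewrite mulr0 => h; apply: (le_trans h); rewrite ler0n.
  have two : forall i j j0, j != j0 -> x i j + x i j0 <= load i.
    move=> i j j0 ne; rewrite /load (bigD1 j0) //= (bigD1 j) //= addrA [x i j0 + _]addrC.
    by rewrite lerDl sumr_ge0.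
  have hUE : forall p, p \in E -> p.1 \in U.
    by move=> [i j]; rewrite !inE => h; apply/existsP; exists j.
  have FU : Full \subset U by apply/subsetP => i; rewrite inE => /andP[].
  have L2 : (#|U| + #|Full| <= #|E|)%N.
    have cardS : forall (T : finType) (A : {set T}), #|A| = (\sum_t (t \in A : nat))%N.
      by move=> T A; rewrite -sum1_card big_mkcond.
    rewrite !cardS -big_split /= sum_pairn; apply: leq_sum => i _.
    rewrite /E /Full !inE /=.
    under eq_bigr => j _ do rewrite inE /=.
    case: (boolP (untight_facility s x i)) => /= hU; last first.
      by [].
    move: (hU) => /existsP [j0 hj0].
    have deg1 : (1 <= \sum_j ((0 < x i j < s%:R)%R : nat))%N.
      by rewrite (bigD1 j0) //= hj0.
    case: (eqVneq (load i) s%:R) => [hfull|]; last first.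
      by rewrite addn0.
    rewrite ?andbT /=.
    have [j1 [nj1 hj1]] : exists j1, j1 != j0 /\ (0 < x i j1 < s%:R).
      case/boolP: [exists j1, (j1 != j0) && (0 < x i j1 < s%:R)].
        by move=> /existsP [j1 /andP[h1 h2]]; exists j1.
      move=> /existsPn hn; exfalso.
      have z0 : forall j, j != j0 -> x i j = 0.
        move=> j nj; move: (hn j); rewrite nj /= => hnu.
        have t2 := two i j j0 nj; have ll := load_le i; have xx := x0 i j.
        move: hj0 => /andP[p0 _].
        case: (ltP 0 (x i j)) hnu => [xp|xn] hnu.
          have xs : x i j < s%:R by lra.
          by move: hnu; rewrite xs.
        by apply/eqP; rewrite eq_le xn xx.
      have : load i = x i j0.
        rewrite /load (bigD1 j0) //= big1 ?addr0 //.
      move: hj0 => /andP[_ h]; rewrite hfull => e; move: h; rewrite -e ltxx.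
      by [].
    by rewrite (bigD1 j0) //= (bigD1 j1) //= hj0 hj1 /= addnA leq_addr.
  have main : forall i0, i0 \in U -> (i0 \in Full -> forall i, i \in U -> i \in Full) ->
      (#|U| <= #|D|)%N /\ (#|E| <= (2 * #|D|).-1)%N.
    move=> i0 i0U hi0.
    have L1 : (#|E| <= #|[set: D]| + #|Full :\ i0|)%N.
      apply: (inj_card2 (K1 := fun (p : F * D) (j' : D) => ((p.2 == j')%:R : R))
                        (K2 := fun (p : F * D) (i' : F) => ((p.1 == i')%:R : R))).
      move=> z zA zc zr.
      have zz : forall i j, z (i, j) = 0.
        apply: (perturb hv (z := fun i j => z (i, j))).
        - move=> i j nz; case: (boolP ((i, j) \in E)) => [|nE].
            by rewrite inE /= => /andP[].
          by move: nz; rewrite zA ?eqxx.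
        - by move=> j; rewrite -colsum_conv zc // inE.
        - move=> i nz; have ll := load_le i; rewrite -/(load i).
          rewrite lt_neqAle ll andbT; apply/eqP => hfull.
          have [j zj] : exists j, z (i, j) != 0.
            case/boolP: [exists j, z (i, j) != 0] => [/existsP[j hj]|/existsPn hn].
              by exists j.
            by move: nz; rewrite big1 ?eqxx // => j _; move: (hn j); rewrite negbK => /eqP.
          have iU : i \in U.
            case: (boolP ((i, j) \in E)) => [/hUE //|nE].
            by move: zj; rewrite zA ?eqxx.
          have iF : i \in Full by rewrite inE iU hfull eqxx.
          case: (eqVneq i i0) => [ei|ne]; last first.
            by move: nz; rewrite -rowsum_conv zr ?eqxx // in_setD1 ne iF.
          subst i.
          have allU := hi0 iF.
          have row0 : forall i, i != i0 -> \sum_j z (i, j) = 0.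
            move=> i ne; case: (boolP (i \in U)) => [iU'|niU].
              by rewrite -rowsum_conv zr // in_setD1 ne allU.
            apply: big1 => jj _; apply: zA; apply/negP => /hUE /=.
            by rewrite (negbTE niU).
          have tot : \sum_i \sum_j z (i, j) = 0.
            rewrite exchange_big /=; apply: big1 => jj _.
            by rewrite -colsum_conv zc // inE.
          have rest : \sum_(i | i != i0) \sum_j z (i, j) = 0.
            by apply: big1 => i; exact: row0.
          move: tot; rewrite (bigD1 i0) //= rest addr0 => h.
          by move: nz; rewrite h eqxx.
      by move=> [i j]; apply: zz.
    rewrite cardsT in L1.
    have e1 := cardsD1 i0 Full.
    have e2 := cardsID Full U; rewrite (setIidPr FU) in e2.
    have b1 : ((i0 \in Full : nat) <= 1)%N by case: (i0 \in Full).
    have sd : (1 <= #|U :\: Full| + (i0 \in Full))%N.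
      case: (boolP (i0 \in Full)) => hF; first by rewrite addn1.
      rewrite addn0 card_gt0; apply/set0Pn; exists i0; by rewrite inE hF i0U.
    split; first by lia.
    rewrite -subn1; lia.
  case/boolP: [exists i, (i \in U) && (load i < s%:R)].
    move=> /existsP [i0 /andP[i0U hl]]; apply: (main i0 i0U).
    by rewrite inE i0U /= => /eqP e; move: hl; rewrite e ltxx.
  move=> /existsPn hn.
  case: (set_0Vmem U) => [U0|[i0 i0U]].
    have E0 : #|E| = 0%N.
      apply/eqP; rewrite cards_eq0; apply/negPn/set0Pn => [[p /hUE]].
      by rewrite U0 inE.
    by rewrite U0 E0 cards0.
  apply: (main i0 i0U) => _ i iU; rewrite inE iU /= eq_le load_le /=.
  by move: (hn i); rewrite iU /= -leNgt.
have bipA : bip (assoc_edge x y) by move=> [?|?] [?|?].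
have bipU : bip (untight_edge s x) by move=> [?|?] [?|?].
split.
-
  move=> cs uc sc; apply/negP => cyc.
  case: cs uc sc cyc => [|a [|b [|r0 r']]] // uc _ cyc.
  have hp : path (assoc_edge x y) a (b :: r0 :: rcons r' a) := cyc.
  have hlast : last a (b :: r0 :: rcons r' a) = a by rewrite /= last_rcons.
  have hodd : odd (size (b :: r0 :: rcons r' a)) = false.
    by move: (path_side bipA hp); rewrite hlast; case: (side a); case: (odd _).
  have sgn : (-1) ^+ (size (b :: r0 :: rcons r' a)) = 1 :> R.
    by rewrite -signr_odd hodd.
  pose z := walkz R a (b :: r0 :: rcons r' a).
  have zz : forall i j, z i j = 0.
    apply: (perturb hv).
    - move=> i j /(walkz_supp hp) [u [w [euw hm]]].
      apply: (edge_pos (P := fun i j => 0 < x i j)) euw hm => i' j' /andP[_ //].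
    - by move=> j; rewrite (walkz_col _ _ bipA hp) hlast sgn mul1r subrr.
    - by move=> i; rewrite (walkz_row _ _ bipA hp) hlast sgn mul1r subrr eqxx.
  have hab : assoc_edge x y a b by move: hp => /= /andP[].
  have [i0 [j0 [hm hv']]] : exists i0 j0, matchE a b i0 j0 /\
      (forall v, isF v i0 || isC v j0 -> v = a \/ v = b).
    exact: match_ex (bipA _ _ hab).
  move: uc; rewrite /= !inE => /andP[/norP[_ /norP[na1 na2]] /andP[/norP[nb1 nb2] _]].
  have notin : forall v, v \in r0 :: r' -> ~~ (isF v i0 || isC v j0).
    move=> v vin; apply/negP => /hv' [ea|eb].
    + by move: vin; rewrite ea inE (negbTE na1) (negbTE na2).
    + by move: vin; rewrite eb inE (negbTE nb1) (negbTE nb2).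
  have e1 : walkz R r0 (rcons r' a) i0 j0 = 0.
    by apply: walkz_belast; rewrite belast_rcons.
  have e2 : matchE b r0 i0 j0 = false.
    apply/negP => /matchE_snd h; move: (notin r0); rewrite inE eqxx h.
    by move/(_ isT).
  move: (zz i0 j0); rewrite /z /= e1 e2 hm subr0 subr0.
  by move/eqP; rewrite oner_eq0.
-
  move=> i1 i2 _ _ /andP[_ l1] /andP[_ l2] /connectP [p hp hl].
  case: (eqVneq i1 i2) => // ne; exfalso.
  have hodd : odd (size p) = false.
    by move: (path_side bipU hp); rewrite -hl /=; case: (odd _).
  have sgn : (-1) ^+ (size p) = 1 :> R by rewrite -signr_odd hodd.
  pose z := walkz R (inl i1) p.
  have zz : forall i j, z i j = 0.
    apply: (perturb hv).
    - move=> i j /(walkz_supp hp) [u [w [euw hm]]].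
      apply: (edge_pos (P := fun i j => 0 < x i j)) euw hm => i' j' /andP[//].
    - by move=> j; rewrite (walkz_col _ _ bipU hp) -hl /= mulr0 subrr.
    - move=> i; rewrite (walkz_row _ _ bipU hp) -hl sgn mul1r /=.
      case: (eqVneq i1 i) => [<- //|n1]; case: (eqVneq i2 i) => [<- //|n2].
      by rewrite subrr eqxx.
  have := walkz_row R i1 bipU hp; rewrite -hl sgn mul1r /= eqxx [i2 == i1]eq_sym (negbTE ne) subr0.
  rewrite big1 => [/eqP|j _]; last exact: zz.
  by rewrite eq_sym oner_eq0.
- exact: cd.1.
- exact: cd.2.
Qed.
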